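(* Fix $\alpha>0$. For each $N\ge 2$, let $T_1,\ldots,T_N$ be drawn independently and uniformly at random from $\{n\in\mathbb{N}: n\le e^{\alpha N}\}$, and let $\Gamma_{j,k}=\gcd(T_j,T_k)$. Let $\mathcal{P}$ denote the set of rational primes. Then for every $s\in(0,1)$ the product \[ C_s:=\prod_{p\in\mathcal{P}}\left(1+\frac{p^s-1}{p^2-p^s}\right) \] is finite, and for every $b>0$ and every $N\ge 2$, \[ \mathbb{P}\Big[\max_{1\le j<k\le N}\Gamma_{j,k}\ge N^{2/s}b^{1/s}\Big]\le \frac{C_s}{2b}. \] *)

(* Defs.v *)
From mathcomp Require Import all_boot.
From Stdlib Require Import Reals.
Set Implicit Arguments. Unset Strict Implicit. Unset Printing Implicit Defensive.

Definition Mrange (alpha : R) (N : nat) : nat :=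
  Z.to_nat (Int_part (exp (alpha * INR N))).

(* A sample (T_1,...,T_N) is f : {ffun 'I_N -> 'I_M}, with T_j = f j + 1,
   so T_j ranges uniformly over {1,...,M}. *)
Definition Tval (N M : nat) (f : {ffun 'I_N -> 'I_M}) (j : 'I_N) : nat :=
  (nat_of_ord (f j)).+1.

Definition maxgcd (N M : nat) (f : {ffun 'I_N -> 'I_M}) : nat :=
  \max_(j < N) \max_(k < N | (j < k)%N) gcdn (Tval f j) (Tval f k).

Definition Rgeb (x y : R) : bool := if Rle_dec y x then true else false.

Definition prob_maxgcd_ge (N M : nat) (thr : R) : R :=
  INR #|[set f : {ffun 'I_N -> 'I_M} | Rgeb (INR (maxgcd f)) thr]|
  / INR #|{ffun 'I_N -> 'I_M}|.

Definition Cfactor (s : R) (p : nat) : R :=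
  (1 + (Rpower (INR p) s - 1) / (INR p ^ 2 - Rpower (INR p) s))%R.

Definition Cpartial (s : R) (n : nat) : R :=
  \big[Rmult/1%R]_(p < n | prime p) Cfactor s p.

(* Main.v *)
From HB Require Import structures.
Require Import Defs.
From mathcomp Require Import all_boot.
From Stdlib Require Import Reals Lra Lia Classical.
Set Implicit Arguments. Unset Strict Implicit. Unset Printing Implicit Defensive.
Local Open Scope R_scope.
Lemma Rplus_A : associative Rplus. Proof. by move=> x y z; rewrite Rplus_assoc. Qed.
Lemma Rmult_A : associative Rmult. Proof. by move=> x y z; rewrite Rmult_assoc. Qed.
HB.instance Definition _ := Monoid.isComLaw.Build R 0%R Rplus Rplus_A Rplus_comm Rplus_0_l.
HB.instance Definition _ := Monoid.isComLaw.Build R 1%R Rmult Rmult_A Rmult_comm Rmult_1_l.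
HB.instance Definition _ := Monoid.isMulLaw.Build R 0%R Rmult Rmult_0_l Rmult_0_r.
HB.instance Definition _ := Monoid.isAddLaw.Build R Rmult Rplus Rmult_plus_distr_r Rmult_plus_distr_l.

Lemma Rsum_le (I : Type) (r : seq I) (P : pred I) (F G : I -> R) :
  (forall i, P i -> F i <= G i) ->
  \big[Rplus/0]_(i <- r | P i) F i <= \big[Rplus/0]_(i <- r | P i) G i.
Proof. move=> H; apply: (big_ind2 (fun x y => x <= y)) => //; [lra | move=> *; lra]. Qed.

Lemma Rsum_ge0 (I : Type) (r : seq I) (P : pred I) (F : I -> R) :
  (forall i, P i -> 0 <= F i) -> 0 <= \big[Rplus/0]_(i <- r | P i) F i.
Proof. move=> H; apply: (big_ind (fun x => 0 <= x)) => //; [lra | move=> *; lra]. Qed.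

Lemma INR_sum (I : Type) (r : seq I) (P : pred I) (F : I -> nat) :
  INR (\sum_(i <- r | P i) F i) = \big[Rplus/0]_(i <- r | P i) INR (F i).
Proof. by apply: (big_morph INR plus_INR). Qed.

Lemma INR_expn m n : INR (expn m n) = INR m ^ n.
Proof. elim: n => [|n IH]; first by rewrite expn0. by rewrite expnS mult_INR IH. Qed.

Lemma div_lt1 a b : 0 < b -> a < b -> a / b < 1.
Proof. move=> hb hab; apply: (Rmult_lt_reg_r b) => //; rewrite /Rdiv Rmult_assoc Rinv_l; lra. Qed.

Lemma inv_lt1 a : 1 < a -> / a < 1.
Proof. move=> h; rewrite -Rinv_1; apply: Rinv_1_lt_contravar; lra. Qed.

Section Geo.
Variables (s : R) (p : nat).
Hypotheses (hs : 0 < s < 1) (hp : leq 2 p).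
Definition ps := Rpower (INR p) s.
Definition w (k : nat) : R := if k is k'.+1 then ps ^ k'.+1 - ps ^ k' else 1.

Lemma INRp_gt1 : 1 < INR p.
Proof. have := le_INR 2%nat p (leP hp). simpl; lra. Qed.

Lemma ps_gt1 : 1 < ps.
Proof.
rewrite /ps -(Rpower_O (INR p)); last (have := INRp_gt1; lra).
apply: Rpower_lt; [exact: INRp_gt1 | lra].
Qed.

Lemma ps_ltp : ps < INR p.
Proof.
rewrite /ps -{2}(Rpower_1 (INR p)); last (have := INRp_gt1; lra).
apply: Rpower_lt; [exact: INRp_gt1 | lra].
Qed.

Lemma w_ge0 k : 0 <= w k.
Proof.
case: k => [|k] /=; first lra.
have h1 := ps_gt1.
have : 1 <= ps ^ k by apply: pow_R1_Rle; lra.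
nra.
Qed.

Lemma w_tele j : \big[Rplus/0]_(k < j.+1) w k = ps ^ j.
Proof.
elim: j => [|j IH]; first by rewrite big_ord_recr big_ord0 /=; lra.
rewrite big_ord_recr IH /=; lra.
Qed.

Lemma wsum_le K : \big[Rplus/0]_(k < K) (w k / (INR p ^ 2) ^ k) <= Cfactor s p.
Proof.
have h1 := ps_gt1; have h2 := ps_ltp; have h3 := INRp_gt1.
set q := INR p ^ 2.
have hq : ps < q by rewrite /q /=; nra.
set x := ps / q.
have hx0 : 0 < x by rewrite /x; apply: Rdiv_lt_0_compat; lra.
have hx1 : x < 1 by rewrite /x; apply: div_lt1; lra.
have inv : forall K0, \big[Rplus/0]_(k < K0.+1) (w k / q ^ k) + (1 - / ps) * x ^ K0.+1 / (1 - x) = Cfactor s p.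
  elim=> [|K0 IH].
    rewrite big_ord_recr big_ord0 /Cfactor -/ps /x /q /=.
    have hq2 : ps < INR p * (INR p * 1) by nra.
    field; repeat split; try lra.
  have qn : forall n, q ^ n <> 0 by move=> n; apply: pow_nonzero; lra.
  have xn : forall n, x ^ n = ps ^ n / q ^ n.
    elim=> [|n IHn] /=; first by field.
    rewrite IHn /x; field; split; [exact: qn | lra].
  rewrite big_ord_recr /= -IH.
  have e1 : w K0.+1 / q ^ K0.+1 = (1 - / ps) * x ^ K0.+1.
    rewrite xn /w /=. field. split; [exact: qn| lra].
  rewrite e1 /=. field. lra.
have pos : forall k, 0 <= w k / q ^ k.
  move=> k; apply: Rmult_le_pos; first exact: w_ge0.
  apply/Rlt_le/Rinv_0_lt_compat/pow_lt; lra.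
rewrite -(inv K) big_ord_recr /=.
have : 0 <= w K / q ^ K by exact: pos.
have : 0 <= (1 - / ps) * (x * x ^ K) / (1 - x).
  apply: Rmult_le_pos; last (apply/Rlt_le/Rinv_0_lt_compat; lra).
  apply: Rmult_le_pos; first (have := inv_lt1 h1; lra).
  apply: Rmult_le_pos; first lra. apply: pow_le; lra.
lra.
Qed.
End Geo.

Lemma Rpower_INR_pos (n : nat) (s : R) : (0 < n)%nat -> 0 < Rpower (INR n) s.
Proof. move=> _; rewrite /Rpower; apply: exp_pos. Qed.

Lemma Rpower_pow_base (y s : R) (j : nat) : 0 < y -> Rpower (y ^ j) s = Rpower y s ^ j.
Proof.
move=> hy; elim: j => [|j IH] /=.
  by rewrite /Rpower ln_1 Rmult_0_r exp_0.
by rewrite -Rpower_mult_distr ?IH //; apply: pow_lt.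
Qed.

Lemma INR_pos (n : nat) : (0 < n)%nat -> 0 < INR n.
Proof. move=> h; apply: lt_0_INR; exact/ltP. Qed.

Definition pilt (m : nat) : nat_pred := [pred q | (q < m)%nat].

Section Step.
Variable s : R.
Hypothesis hs : 0 < s < 1.

Definition Q (m a b : nat) : R := Rpower (INR ((gcdn a b)`_(pilt m))) s.
Definition T (m M : nat) : R :=
  \big[Rplus/0]_(a < M) \big[Rplus/0]_(b < M) Q m a.+1 b.+1.

Lemma reindex (q M : nat) (F : nat -> R) : (0 < q)%nat ->
  \big[Rplus/0]_(a < M) (if q %| a.+1 then F a.+1 else 0)
  = \big[Rplus/0]_(a < M %/ q) F (q * a.+1)%nat.
Proof.
move=> hq; elim: M => [|M IH]; first by rewrite div0n !big_ord0.
rewrite big_ord_recr /= IH divnS //.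
case: ifP => hd /=.
  rewrite add1n big_ord_recr /=.
  have e : (q * (M %/ q).+1)%nat = M.+1.
    by rewrite -[RHS](divnK hd) divnS // hd add1n mulnC.
  by rewrite e.
by rewrite /= Rplus_0_r.
Qed.

Lemma Cpartial_S m : Cpartial s m.+1 = Cpartial s m * (if prime m then Cfactor s m else 1).
Proof.
rewrite /Cpartial big_mkcond big_ord_recr /= -big_mkcond /=.
by case: (prime m).
Qed.

Lemma Q_base a b : Q 0 a b = 1.
Proof.
rewrite /Q; have -> : (gcdn a b)`_(pilt 0) = 1%nat by rewrite /partn big_pred0.
by rewrite /Q /= /Rpower ln_1 Rmult_0_r exp_0.
Qed.
End Step.

Section QL.
Variable s : R.
Lemma Q_nonprime m a b : ~~ prime m -> Q s m.+1 a b = Q s m a b.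
Proof.
move=> hm; rewrite /Q (@eq_in_partn _ (pilt m)) // => q.
rewrite [q \in \pi(_)]inE mem_primes => /andP[pq _].
rewrite !inE ltnS leq_eqVlt; case: eqP => // e; by rewrite -e pq in hm.
Qed.

Lemma Q_prime p a b : prime p -> (0 < a)%nat -> (0 < b)%nat ->
  Q s p.+1 a b = Q s p a b * ps s p ^ (minn (logn p a) (logn p b)).
Proof.
move=> pp ha hb.
have hg : (0 < gcdn a b)%nat by rewrite gcdn_gt0 ha.
set g := gcdn a b.
have e : g`_(pilt p.+1) = (g`_(pilt p) * expn p (minn (logn p a) (logn p b)))%nat.
  rewrite -(partnC (pilt p) (part_gt0 (pilt p.+1) g)).
  rewrite partn_part; last by move=> q; rewrite !inE => /ltnW.
  congr (_ * _)%nat.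
  rewrite -partnI (@eq_partn _ p); last first.
    by move=> q; rewrite !inE ltnS -leqNgt -eqn_leq.
  by rewrite p_part logn_gcd.
rewrite /Q e mult_INR -Rpower_mult_distr; last 2 first.
- by apply: INR_pos; exact: part_gt0.
- by apply: INR_pos; rewrite expn_gt0 prime_gt0.
rewrite INR_expn Rpower_pow_base //.
by apply: INR_pos; exact: prime_gt0.
Qed.

Lemma Q_scale p k a b : prime p -> (0 < a)%nat -> (0 < b)%nat ->
  Q s p (expn p k * a) (expn p k * b) = Q s p a b.
Proof.
move=> pp ha hb.
rewrite /Q -muln_gcdr partnM; last 2 first.
- by rewrite expn_gt0 prime_gt0.
- by rewrite gcdn_gt0 ha.
rewrite partnX part_p'nat ?exp1n ?mul1n //.
by rewrite pnatE // !inE ltnn.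
Qed.
End QL.

Lemma Rsum_const n c : \big[Rplus/0]_(i < n) c = INR n * c.
Proof. elim: n => [|n IH]; first by rewrite big_ord0 /= Rmult_0_l.
by rewrite big_ord_recr IH S_INR /=; ring. Qed.

Lemma logn_lt p n : (1 < p)%nat -> (0 < n)%nat -> (logn p n < n)%nat.
Proof.
move=> hp hn; apply: (@leq_trans (expn p (logn p n))); first exact: ltn_expl.
by apply: dvdn_leq => //; exact: pfactor_dvdnn.
Qed.

Section Main.
Variable s : R.
Hypothesis hs : 0 < s < 1.

Lemma pow_as_sum p M a b : prime p -> (a < M)%nat -> (b < M)%nat ->
  ps s p ^ (minn (logn p a.+1) (logn p b.+1)) =
  \big[Rplus/0]_(k < M) (if (expn p k %| a.+1) && (expn p k %| b.+1) then w s p k else 0).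
Proof.
move=> pp ha hb.
set j := minn _ _.
have hj : (j.+1 <= M)%nat.
  apply: leq_trans ha; rewrite ltnS.
  apply: leq_trans (geq_minl _ _) _.
  by rewrite -ltnS; apply: logn_lt => //; exact: prime_gt1.
rewrite -(w_tele s p j) (big_ord_widen _ _ hj) big_mkcond.
apply: eq_bigr => k _.
by rewrite !pfactor_dvdn // ltnS leq_min.
Qed.

Lemma T_step p M : prime p ->
  T s p.+1 M = \big[Rplus/0]_(k < M) (w s p k * T s p (M %/ expn p k)).
Proof.
move=> pp.
have hp0 : (0 < p)%nat by exact: prime_gt0.
rewrite /T.
have E : forall a b : 'I_M, Q s p.+1 a.+1 b.+1 =
   \big[Rplus/0]_(k < M) (w s p k *
      (if expn p k %| a.+1 then (if expn p k %| b.+1 then Q s p a.+1 b.+1 else 0) else 0)).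
  move=> a b; rewrite Q_prime // (pow_as_sum pp (ltn_ord a) (ltn_ord b)) big_distrr.
  apply: eq_bigr => k _; case: (expn p k %| a.+1); case: (expn p k %| b.+1) => /=; lra.
under eq_bigr => a _ do under eq_bigr => b _ do rewrite E.
under eq_bigr => a _ do rewrite exchange_big.
rewrite exchange_big; apply: eq_bigr => k _.
under eq_bigr => a _ do rewrite -big_distrr.
rewrite -big_distrr; congr (_ * _).
have hd : (0 < expn p k)%nat by rewrite expn_gt0 hp0.
set d := expn p k.
transitivity (\big[Rplus/0]_(a < M) (if d %| a.+1 then
   (fun x => \big[Rplus/0]_(b < M) (if d %| b.+1 then Q s p x b.+1 else 0)) a.+1 else 0)).
  apply: eq_bigr => a _ /=; case: (d %| a.+1) => //.
  by rewrite big1.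
rewrite (@reindex _ _ (fun x => \big[Rplus/0]_(b < M) (if d %| b.+1 then Q s p x b.+1 else 0))) //; apply: eq_bigr => a _.
rewrite (@reindex _ _ (fun y => Q s p (d * a.+1)%nat y)) //.
apply: eq_bigr => b _; exact: Q_scale.
Qed.
End Main.

Lemma Cfactor_ge1 s p : 0 < s < 1 -> prime p -> 1 <= Cfactor s p.
Proof.
move=> hs pp; have hp := prime_gt1 pp.
have h1 := ps_gt1 hs hp; have h2 := ps_ltp hs hp; have h3 := INRp_gt1 hp.
rewrite /Cfactor -/(ps s p).
have : 0 < INR p ^ 2 - ps s p by rewrite /=; nra.
move=> h; have : 0 <= (ps s p - 1) / (INR p ^ 2 - ps s p).
  apply: Rmult_le_pos; first lra. by apply/Rlt_le/Rinv_0_lt_compat.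
lra.
Qed.

Lemma Cpartial_ge1 s n : 0 < s < 1 -> 1 <= Cpartial s n.
Proof.
move=> hs; rewrite /Cpartial; apply: (big_ind (fun x => 1 <= x)); first lra.
  move=> x y hx hy; nra.
move=> i pi; exact: Cfactor_ge1.
Qed.

Lemma div_bound M d : (0 < d)%nat -> INR (M %/ d) ^ 2 <= INR M ^ 2 / INR d ^ 2.
Proof.
move=> hd; have hd' := INR_pos hd.
have h : INR (M %/ d) * INR d <= INR M.
  rewrite -mult_INR; apply: le_INR; apply/leP; exact: leq_trunc_div.
have h2 : INR (M %/ d) <= INR M / INR d.
  apply: (Rmult_le_reg_r (INR d)) => //; rewrite /Rdiv Rmult_assoc Rinv_l; lra.
have -> : INR M ^ 2 / INR d ^ 2 = (INR M / INR d) ^ 2 by field; lra.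
apply: pow_incr; split => //; exact: pos_INR.
Qed.

Lemma T_bound s m M : 0 < s < 1 -> T s m M <= INR M ^ 2 * Cpartial s m.
Proof.
move=> hs; elim: m M => [|m IH] M.
  rewrite /T; under eq_bigr do under eq_bigr do rewrite Q_base.
  rewrite /Cpartial big_ord0 !Rsum_const; apply: Req_le => /=; ring.
rewrite Cpartial_S; case pm: (prime m).
  have hm := prime_gt1 pm.
  rewrite T_step //.
  have hCp := Cpartial_ge1 m hs.
  apply: (@Rle_trans _ (\big[Rplus/0]_(k < M) (w s m k / (INR m ^ 2) ^ k * (INR M ^ 2 * Cpartial s m)))).
    apply: Rsum_le => k _.
    have hw := w_ge0 hs hm k.
    apply: (@Rle_trans _ (w s m k * (INR (M %/ expn m k) ^ 2 * Cpartial s m))).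
      by apply: Rmult_le_compat_l => //; apply: IH.
    have hd : (0 < expn m k)%nat by rewrite expn_gt0 prime_gt0.
    have := div_bound M hd; rewrite INR_expn -pow_mult Nat.mul_comm pow_mult => hb.
    have hq : 0 < (INR m ^ 2) ^ k by apply: pow_lt; apply: pow_lt; apply: INR_pos; exact: prime_gt0.
    rewrite /Rdiv Rmult_assoc; apply: Rmult_le_compat_l => //.
    rewrite -Rmult_assoc (Rmult_comm (/ _)); apply: Rmult_le_compat_r; first lra.
    exact: hb.
  rewrite -big_distrl /=.
  have := wsum_le hs hm M.
  have : 0 <= INR M ^ 2 * Cpartial s m by apply: Rmult_le_pos; [apply: pow_le; exact: pos_INR | lra].
  move=> h1 h2.
  apply: (@Rle_trans _ (Cfactor s m * (INR M ^ 2 * Cpartial s m))); first exact: Rmult_le_compat_r.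
  apply: Req_le; ring.
rewrite /T; under eq_bigr do under eq_bigr do rewrite Q_nonprime ?pm //.
rewrite Rmult_1_r; exact: IH.
Qed.

Section Bound.
Variable s : R.
Hypothesis hs : 0 < s < 1.
Definition u (d : nat) : R := Rpower (INR d) (s - 2).
Definition qq : R := Rpower 2 (s - 1).

Lemma u_ge0 d : 0 <= u d.
Proof. rewrite /u /Rpower; apply/Rlt_le/exp_pos. Qed.

Lemma u_decr x y : 0 < x -> x <= y -> Rpower y (s - 2) <= Rpower x (s - 2).
Proof.
move=> hx hxy.
have -> : s - 2 = - (2 - s) by ring.
rewrite !Rpower_Ropp; apply: Rinv_le_contravar; first by rewrite /Rpower; apply: exp_pos.
apply: Rle_Rpower_l; lra.
Qed.

Lemma qq_lt1 : qq < 1.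
Proof.
rewrite /qq -[X in _ < X](Rpower_O 2); last lra.
apply: Rpower_lt; lra.
Qed.

Lemma qq_pos : 0 < qq.
Proof. rewrite /qq /Rpower; apply: exp_pos. Qed.

Lemma geo_bound K : \big[Rplus/0]_(k < K) qq ^ k <= / (1 - qq).
Proof.
have h1 := qq_lt1; have h0 := qq_pos.
have inv : forall K, \big[Rplus/0]_(k < K) qq ^ k + qq ^ K / (1 - qq) = / (1 - qq).
  elim=> [|n IH]; first by rewrite big_ord0 /=; field; lra.
  rewrite big_ord_recr /= -IH /=; field; lra.
rewrite -(inv K); have : 0 <= qq ^ K / (1 - qq).
  apply: Rmult_le_pos; [apply: pow_le; lra | apply/Rlt_le/Rinv_0_lt_compat; lra].
lra.
Qed.

Lemma iter_Rplus k c : iter k (Rplus c) 0 = INR k * c.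
Proof. elim: k => [|k IH] /=; first ring. rewrite IH; destruct k; simpl; ring. Qed.

Definition Su (n : nat) : R := \big[Rplus/0]_(1 <= d < n) u d.

Lemma Su_mono n m : (n <= m)%nat -> Su n <= Su m.
Proof.
move=> hnm; rewrite /Su.
case: (leqP 1 n) => h1.
  rewrite (@big_cat_nat _ _ _ n 1 m) //=.
  have : 0 <= \big[Rplus/0]_(n <= i < m) u i by apply: Rsum_ge0 => *; exact: u_ge0.
  lra.
rewrite [\big[Rplus/0]_(1 <= d < n) _]big_geq; last exact: ltnW.
by apply: Rsum_ge0 => *; exact: u_ge0.
Qed.

Lemma Su_pow2 K : Su (expn 2 K).+1 <= 1 + \big[Rplus/0]_(k < K) qq ^ k.
Proof.
elim: K => [|K IH].
  rewrite /Su expn0 big_nat1 big_ord0 /= /u /Rpower ln_1 Rmult_0_r exp_0; lra.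
rewrite big_ord_recr /=.
have hle : (1 <= (expn 2 K).+1)%nat by [].
have hle2 : ((expn 2 K).+1 <= (expn 2 K.+1).+1)%nat by rewrite ltnS leq_exp2l.
rewrite /Su (@big_cat_nat _ _ _ (expn 2 K).+1) //= -/(Su _).
rewrite -Rplus_assoc; apply: Rplus_le_compat => //.
have h2K : 0 < INR (expn 2 K) by apply: INR_pos; rewrite expn_gt0.
apply: (@Rle_trans _ (\big[Rplus/0]_((expn 2 K).+1 <= i < (expn 2 K.+1).+1) Rpower (INR (expn 2 K)) (s - 2))).
  rewrite big_nat_cond [in X in _ <= X]big_nat_cond.
  apply: Rsum_le => i /andP[/andP[hi _] _].
  apply: u_decr => //; apply: le_INR; apply/leP; exact: ltnW.
rewrite big_const_nat iter_Rplus subSS expnS mul2n -addnn addnK.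
rewrite !INR_expn (_ : INR 2 = 2); last by simpl; ring.
rewrite Rpower_pow_base; last lra.
rewrite /= -Rpow_mult_distr /qq.
have -> : s - 1 = 1 + (s - 2) by ring.
rewrite Rpower_plus Rpower_1; last lra.
apply: Req_le; f_equal; f_equal; simpl; ring.
Qed.

Lemma Su_bound n : Su n <= 1 + / (1 - qq).
Proof.
apply: (@Rle_trans _ (Su (expn 2 n).+1)).
  apply: Su_mono; apply: leq_trans (ltnW (@ltn_expl 2 n isT)) (leqnSn _).
apply: (Rle_trans _ _ _ (Su_pow2 n)).
have := geo_bound n; lra.
Qed.
End Bound.

Lemma div_le_div a b c d : 0 < b -> 0 < d -> a * d <= c * b -> a / b <= c / d.
Proof.
move=> hb hd h.
have -> : a / b = (a * d) * / (b * d) by field; lra.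
have -> : c / d = (c * b) * / (b * d) by field; lra.
apply: Rmult_le_compat_r => //; apply/Rlt_le/Rinv_0_lt_compat/Rmult_lt_0_compat => //.
Qed.

Lemma le_addr x y : 0 <= y -> x <= x + y.
Proof. lra. Qed.

Lemma exp_le x y : x <= y -> exp x <= exp y.
Proof. case=> h; [apply/Rlt_le/exp_increasing/h | rewrite h; lra]. Qed.

Section Bound2.
Variable s : R.
Hypothesis hs : 0 < s < 1.

Lemma u_eq p : (0 < p)%nat -> u s p = ps s p / INR p ^ 2.
Proof.
move=> hp; have hp' := INR_pos hp.
rewrite /u /ps (_ : s - 2 = s + - INR 2); last by simpl; ring.
by rewrite Rpower_plus Rpower_Ropp Rpower_pow.
Qed.

Lemma Cfactor_le_exp p : prime p -> Cfactor s p <= exp (2 * u s p).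
Proof.
move=> pp; have hp := prime_gt1 pp.
have h1 := ps_gt1 hs hp; have h2 := ps_ltp hs hp; have h3 := INRp_gt1 hp.
apply: Rle_trans (exp_ineq1_le _); apply: Rplus_le_compat_l.
rewrite u_eq ?prime_gt0 // /Rdiv -Rmult_assoc -/(Rdiv _ _) -/(ps s p).
have hP : INR p ^ 2 = INR p * INR p by simpl; ring.
apply: div_le_div; rewrite hP; nra.
Qed.

Lemma u0 : u s 0 = 1.
Proof.
rewrite /u /Rpower.
have -> : ln (INR 0) = 0.
  unfold ln; destruct (Rlt_dec 0 (INR 0)) as [h|h]; [exfalso; exact: (Rlt_irrefl 0 h) | reflexivity].
by rewrite Rmult_0_r exp_0.
Qed.

Definition Bnd : R := exp (2 * (2 + / (1 - qq s))).

Lemma Cpartial_bound n : Cpartial s n <= Bnd.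
Proof.
apply: (@Rle_trans _ (\big[Rmult/1]_(p < n | prime p) exp (2 * u s p))).
  rewrite /Cpartial.
  apply: (proj2 (@big_ind2 R R (fun x y => 0 <= x <= y) 1 Rmult 1 Rmult _ _ _ _ _ _ _ _)); first lra.
    move=> x1 x2 y1 y2 [h1 h2] [h3 h4]; split; first nra.
    apply: Rmult_le_compat => //.
  move=> i pi; split; last exact: Cfactor_le_exp.
  have := Cfactor_ge1 hs pi; lra.
rewrite -(big_morph exp exp_plus exp_0) /Bnd; apply: exp_le.
rewrite -big_distrr /=; apply: Rmult_le_compat_l; first lra.
apply: (@Rle_trans _ (\big[Rplus/0]_(p < n) u s p)).
  rewrite [X in _ <= X](bigID (fun p : 'I_n => prime p)) /=.
  apply: le_addr; apply: Rsum_ge0 => *; exact: u_ge0.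
case: n => [|n]; first by rewrite big_ord0; have := qq_lt1 hs; have := Rinv_0_lt_compat (1 - qq s); lra.
have -> : \big[Rplus/0]_(p < n.+1) u s p = \big[Rplus/0]_(0 <= p < n.+1) u s p by rewrite big_mkord.
rewrite big_ltn // u0 -/(Su s _).
have := Su_bound hs n.+1; lra.
Qed.
End Bound2.

Lemma Cs_exists s : 0 < s < 1 -> {Cs | Un_cv (Cpartial s) Cs}.
Proof.
move=> hs; apply: growing_cv.
  move=> n; rewrite Cpartial_S; have := Cpartial_ge1 n hs.
  case pn: (prime n); last lra.
  have := Cfactor_ge1 hs pn; nra.
exists (Bnd s) => x [n ->]; exact: Cpartial_bound.
Qed.

Lemma Rsum_pick (T : finType) (x : T) (F : T -> R) :
  \big[Rplus/0]_(a : T) (if x == a then F a else 0) = F x.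
Proof.
rewrite -big_mkcond (eq_bigl (fun a => a == x)); first by rewrite big_pred1_eq.
by move=> a; rewrite eq_sym.
Qed.

Lemma Rsum_card (T : finType) (P : pred T) (c : R) :
  \big[Rplus/0]_(x : T) (if P x then c else 0) = INR #|P| * c.
Proof.
rewrite -big_mkcond -sum1_card INR_sum big_distrl /=.
by apply: eq_bigr => i _; rewrite Rmult_1_l.
Qed.

Lemma card_two (N M : nat) (j k : 'I_N) (a b : 'I_M) : j != k ->
  #|[pred f : {ffun 'I_N -> 'I_M} | (f j == a) && (f k == b)]| = expn M (N - 2).
Proof.
move=> hjk.
pose F := fun i : 'I_N => if i == j then pred1 a else if i == k then pred1 b else predT.
rewrite (@eq_card _ _ (finfun.family F)); last first.
  move=> f; rewrite inE; apply/andP/familyP.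
    move=> [/eqP hj /eqP hk] i; rewrite /F; case: eqP => [->|_]; first by rewrite inE hj.
    by case: eqP => [->|_]; first by rewrite inE hk.
  move=> h; split.
    by have := h j; rewrite /F eqxx.
  by have := h k; rewrite /F eq_sym (negbTE hjk) eqxx.
rewrite card_family foldrE big_map big_enum /=.
rewrite (bigD1 j) //= (bigD1 k) //=; last by rewrite eq_sym.
rewrite /F eqxx eq_sym (negbTE hjk) eqxx !card1 !mul1n.
rewrite (eq_bigr (fun _ => M)); last first.
  move=> i /andP[hij hik]; rewrite (negbTE hij) (negbTE hik).
  by transitivity #|(@predT (ordinal M))|; [apply: eq_card | exact: card_ord].
rewrite (@prod_nat_const _ [pred i | (i != j) && (i != k)]); congr expn.
have : #|'I_N| = (#|[pred i | (i != j) && (i != k)]|).+2.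
  rewrite (cardD1 j) (cardD1 k) !inE eq_sym hjk /=.
  rewrite add1n add1n; congr (_.+2).
  apply: eq_card => i; rewrite !inE; by case: (i != j); case: (i != k).
by rewrite card_ord => e; rewrite [in RHS]e subSS subSS subn0.
Qed.

Lemma marginal (N M : nat) (j k : 'I_N) (G : 'I_M -> 'I_M -> R) : j != k ->
  \big[Rplus/0]_(f : {ffun 'I_N -> 'I_M}) G (f j) (f k)
  = INR (expn M (N - 2)) * \big[Rplus/0]_(a : 'I_M) \big[Rplus/0]_(b : 'I_M) G a b.
Proof.
move=> hjk.
transitivity (\big[Rplus/0]_(f : {ffun 'I_N -> 'I_M}) \big[Rplus/0]_(a : 'I_M) \big[Rplus/0]_(b : 'I_M)
    (if (f j == a) && (f k == b) then G a b else 0)).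
  apply: eq_bigr => f _.
  rewrite -(Rsum_pick (f j) (fun a => G a (f k))); apply: eq_bigr => a _.
  have [e|ne] := eqVneq (f j) a.
    by rewrite /= Rsum_pick.
  by rewrite /= big1.
rewrite exchange_big; under eq_bigr do rewrite exchange_big.
rewrite big_distrr; apply: eq_bigr => a _; rewrite big_distrr; apply: eq_bigr => b _.
rewrite (Rsum_card (fun f : {ffun 'I_N -> 'I_M} => (f j == a) && (f k == b))).
rewrite -(card_two a b hjk) /=; do 2 f_equal; by apply: eq_card.
Qed.

Lemma gcd_sum_bound s M : 0 < s < 1 ->
  \big[Rplus/0]_(a < M) \big[Rplus/0]_(b < M) Rpower (INR (gcdn a.+1 b.+1)) s
  <= INR M ^ 2 * Cpartial s M.+1.
Proof.
move=> hs; apply: (Rle_trans _ _ _ _ (@T_bound s M.+1 M hs)).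
apply: Req_le; rewrite /T; apply: eq_bigr => a _; apply: eq_bigr => b _.
rewrite /Q part_pnat_id //.
apply/pnatP; first by rewrite gcdn_gt0.
move=> q pq hq; rewrite inE /= ltnS.
apply: leq_trans (dvdn_leq _ hq) _; first by rewrite gcdn_gt0.
apply: leq_trans (dvdn_leq _ (dvdn_gcdl _ _)) _ => //.
Qed.

Lemma event_pair N M (f : {ffun 'I_N -> 'I_M}) (thr : R) : 0 < thr -> thr <= INR (maxgcd f) ->
  exists j k : 'I_N, (j < k)%nat /\ thr <= INR (gcdn (Tval f j) (Tval f k)).
Proof.
move=> ht hm; apply: NNPP => hne.
set m := maxgcd f in hm.
have hm0 : (0 < m)%nat.
  case: m hm => [|m'] //= h; simpl in h; lra.
have : (m <= m.-1)%nat.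
  apply/bigmax_leqP => j _; apply/bigmax_leqP => k hjk.
  case: (Rlt_le_dec (INR (gcdn (Tval f j) (Tval f k))) thr) => h; last first.
    by exfalso; apply: hne; exists j, k.
  have : INR (gcdn (Tval f j) (Tval f k)) < INR m by lra.
  by move/INR_lt/ltP => hg; rewrite -ltnS prednK.
by rewrite leqNgt ltn_predL hm0.
Qed.

Lemma pairs_count N :
  (2 * \sum_(j < N) \sum_(k < N) ((j < k)%nat : nat) <= N * N)%nat.
Proof.
have e : (\sum_(j < N) \sum_(k < N) ((j < k)%nat : nat) = \sum_(j < N) \sum_(k < N) ((k < j)%nat : nat))%nat.
  by rewrite exchange_big.
rewrite mul2n -addnn {2}e -big_split /=.
have -> : (N * N = \sum_(j < N) \sum_(k < N) 1)%nat by rewrite !sum_nat_const !card_ord muln1.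
apply: leq_sum => j _; rewrite -big_split /=; apply: leq_sum => k _.
by case: ltngtP.
Qed.

Lemma main_ineq s N M thr : 0 < s < 1 -> 0 < thr ->
  INR #|[set f : {ffun 'I_N -> 'I_M} | Rgeb (INR (maxgcd f)) thr]| * Rpower thr s
  <= INR (N * N) / 2 * (INR (expn M (N - 2)) * (INR M ^ 2 * Cpartial s M.+1)).
Proof.
move=> hs ht.
set S := [set f : {ffun 'I_N -> 'I_M} | Rgeb (INR (maxgcd f)) thr].
set G := fun (f : {ffun 'I_N -> 'I_M}) (j k : 'I_N) => Rpower (INR (gcdn (Tval f j) (Tval f k))) s.
set B := INR M ^ 2 * Cpartial s M.+1.
have hG : forall f j k, 0 <= G f j k by move=> *; rewrite /G /Rpower; apply/Rlt_le/exp_pos.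
have hB : 0 <= B.
  apply: Rmult_le_pos; first (apply: pow_le; exact: pos_INR).
  have := Cpartial_ge1 M.+1 hs; lra.
have hMN : 0 <= INR (expn M (N - 2)) by exact: pos_INR.
have step1 : INR #|S| * Rpower thr s <=
   \big[Rplus/0]_(f : {ffun 'I_N -> 'I_M}) \big[Rplus/0]_(j : 'I_N) \big[Rplus/0]_(k : 'I_N)
     (if (j < k)%nat then G f j k else 0).
  rewrite (_ : INR #|S| * Rpower thr s = \big[Rplus/0]_(f : {ffun 'I_N -> 'I_M}) (if f \in S then Rpower thr s else 0)); last first.
    by rewrite (Rsum_card (fun f => f \in S)); congr (INR _ * _); apply: eq_card.
  apply: Rsum_le => f _.
  case: ifP => hf; last first.
    apply: Rsum_ge0 => j _; apply: Rsum_ge0 => k _; case: ifP => _; [exact: hG | lra].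
  move: hf; rewrite inE /Rgeb; case: Rle_dec => // hle _.
  have [j [k [hjk hg]]] := event_pair ht hle.
  apply: (@Rle_trans _ (G f j k)).
    apply: Rle_Rpower_l; lra.
  rewrite (bigD1 j) //= (bigD1 k) //= hjk.
  have h1 : 0 <= \big[Rplus/0]_(i < N | i != k) (if (j < i)%nat then G f j i else 0).
    apply: Rsum_ge0 => k' _; case: ifP => _; [exact: hG | lra].
  have h2 : 0 <= \big[Rplus/0]_(i < N | i != j) \big[Rplus/0]_(k0 < N) (if (i < k0)%nat then G f i k0 else 0).
    apply: Rsum_ge0 => j' _; apply: Rsum_ge0 => k' _; case: ifP => _; [exact: hG | lra].
  apply: (Rle_trans _ _ _ (le_addr _ h1)); exact: le_addr.
apply: (Rle_trans _ _ _ step1).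
rewrite exchange_big.
apply: (@Rle_trans _ (\big[Rplus/0]_(j : 'I_N) \big[Rplus/0]_(k : 'I_N)
     (INR ((j < k)%nat : nat) * (INR (expn M (N - 2)) * B)))).
  apply: Rsum_le => j _; rewrite exchange_big; apply: Rsum_le => k _.
  case hjk: (j < k)%nat; last by rewrite big1 //= Rmult_0_l; lra.
  rewrite /G /Tval.
  rewrite (@marginal N M j k (fun a b => Rpower (INR (gcdn a.+1 b.+1)) s)); last by rewrite neq_ltn hjk.
  rewrite /= Rmult_1_l; apply: Rmult_le_compat_l => //.
  exact: gcd_sum_bound.
under eq_bigr do rewrite -big_distrl /=.
rewrite -big_distrl /=.
under eq_bigr do rewrite -INR_sum.
rewrite -INR_sum.
apply: Rmult_le_compat_r; first exact: Rmult_le_pos.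
have := le_INR _ _ (leP (pairs_count N)).
rewrite mult_INR /=; lra.
Qed.

Lemma Cpartial_growing s : 0 < s < 1 -> Un_growing (Cpartial s).
Proof.
move=> hs n; rewrite Cpartial_S; have := Cpartial_ge1 n hs.
case pn: (prime n); last lra.
have := Cfactor_ge1 hs pn; nra.
Qed.

Lemma Mrange_pos alpha N : 0 < alpha -> (0 < Mrange alpha N)%nat.
Proof.
move=> ha; rewrite /Mrange.
set r := exp (alpha * INR N).
have hr : 1 <= r.
  have := exp_ineq1_le (alpha * INR N); have : 0 <= alpha * INR N.
    apply: Rmult_le_pos; [lra | exact: pos_INR].
  rewrite /r; lra.
have [h1 h2] := base_Int_part r.
have : (0 < Int_part r)%Z by apply: lt_0_IZR; lra.
move=> hz; apply/ltP.
lia.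
Qed.

Lemma main_thm (alpha : R) (halpha : 0 < alpha) :
  forall s : R, 0 < s < 1 ->
  exists Cs : R,
    Un_cv (Cpartial s) Cs /\
    (forall (b : R) (N : nat), 0 < b -> leq 2 N ->
       prob_maxgcd_ge N (Mrange alpha N)
          (Rpower (INR N) (2 / s) * Rpower b (1 / s))
        <= Cs / (2 * b)).
Proof.
move=> s hs.
have [Cs hCs] := Cs_exists hs.
exists Cs; split => // b N hb hN.
set M := Mrange alpha N.
have hM := Mrange_pos N halpha; rewrite -/M in hM.
have hNR : 2 <= INR N by have := le_INR 2%nat N (leP hN); simpl; lra.
have hMR : 0 < INR M := INR_pos hM.
set thr := Rpower (INR N) (2 / s) * Rpower b (1 / s).
have ht : 0 < thr by rewrite /thr /Rpower; apply: Rmult_lt_0_compat; apply: exp_pos.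
have hthr : Rpower thr s = INR N ^ 2 * b.
  rewrite /thr -Rpower_mult_distr; try (rewrite /Rpower; apply: exp_pos).
  rewrite !Rpower_mult (_ : 2 / s * s = INR 2); last by simpl; field; lra.
  rewrite (_ : 1 / s * s = 1); last by field; lra.
  rewrite Rpower_pow ?Rpower_1 //; lra.
have hCp := growing_ineq _ _ (Cpartial_growing hs) hCs M.+1.
have hmain := main_ineq N M hs ht.
rewrite -/thr hthr in hmain.
have hpow : INR (expn M (N - 2)) * INR M ^ 2 = INR (expn M N).
  by rewrite -INR_expn -mult_INR multE -expnD subnK.
have hMN : 0 < INR (expn M N) by apply: INR_pos; rewrite expn_gt0 hM.
rewrite /prob_maxgcd_ge card_ffun !card_ord -/thr.
have hC1 := Cpartial_ge1 M.+1 hs.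
set c := INR #|_| in hmain *.
have hc : 0 <= c by exact: pos_INR.
have hX : INR (N * N) = INR N ^ 2 by rewrite mult_INR /=; ring.
have hA : 0 <= INR (expn M (N - 2)) by exact: pos_INR.
have hB2 : 0 <= INR M ^ 2 by apply: pow_le; lra.
have h1 : c * (INR N ^ 2 * b) <= INR N ^ 2 / 2 * (Cs * INR (expn M N)).
  apply: (Rle_trans _ _ _ hmain).
  rewrite hX -hpow.
  apply: (@Rle_trans _ (INR N ^ 2 / 2 * (INR (expn M (N - 2)) * INR M ^ 2 * Cpartial s M.+1))).
    apply: Req_le; ring.
  apply: (@Rle_trans _ (INR N ^ 2 / 2 * (INR (expn M (N - 2)) * INR M ^ 2 * Cs))); last by apply: Req_le; ring.
  apply: Rmult_le_compat_l; first nra.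
  apply: Rmult_le_compat_l => //; exact: Rmult_le_pos.
have hN2 : 0 < INR N ^ 2 / 2 by nra.
have h2 : c * (2 * b) <= Cs * INR (expn M N).
  apply: (Rmult_le_reg_l _ _ _ hN2).
  apply: (@Rle_trans _ (c * (INR N ^ 2 * b))); first by apply: Req_le; field.
  exact: h1.
apply: div_le_div => //; first lra.
Qed.

Local Close Scope R_scope.

Theorem theorem1p1 (alpha : R) (halpha : (0 < alpha)%R) :
  forall s : R, (0 < s < 1)%R ->
  exists Cs : R,
    Un_cv (Cpartial s) Cs /\
    (forall (b : R) (N : nat), (0 < b)%R -> (2 <= N)%N ->
       (prob_maxgcd_ge N (Mrange alpha N)
          (Rpower (INR N) (2 / s) * Rpower b (1 / s))
        <= Cs / (2 * b))%R).
Proof. exact: main_thm. Qed.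

Print Assumptions theorem1p1.
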